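(* Let $\mathcal{G}$ be a GBS graph of groups, $w=a_0^{k_0}y_1a_1^{k_1}\cdots y_na_n^{k_n}$ a $\mathcal{G}$-factorization, and $0\le i\le j\le n$. Then $w_{i,j}=a_i^{k_i}y_{i+1}a_{i+1}^{k_{i+1}}\cdots y_ja_j^{k_j}$ represents an element of $\langle a_i\rangle\le F(\mathcal{G})$ if and only if $w_{i,j}=a_i^{k_{i,j}}$ in $F(\mathcal{G})$, where $$k_{i,j}=\sum_{\nu=i}^{j}k_\nu\cdot\prod_{\mu=i+1}^{\nu}\frac{\alpha_\mu}{\beta_\mu}\in\mathbb{Q},\qquad \alpha_\mu=\alpha_{y_\mu},\ \beta_\mu=\beta_{y_\mu}.$$
   Context: $\mathcal{G}$ consists of a finite connected graph $Y$ (vertices $V(Y)$, edges $E(Y)$, maps $\iota,\tau:E(Y)\to V(Y)$, fixed-point-free involution $y\mapsto\bar y$ with $\iota(\bar y)=\tau(y)$) and integers $\alpha_y,\beta_y\in\mathbb{Z}\setminus\{0\}$ with $\alpha_y=\beta_{\bar y}$. $F(\mathcal{G})$ is the group with generators $V(Y)\cup E(Y)$ and relations $\bar yy=1$, $y\,b^{\beta_y}\bar y=a^{\alpha_y}$ for each $y\in E(Y)$ with $a=\iota(y)$, $b=\tau(y)$. A $\mathcal{G}$-factorization is a word $a_0^{k_0}y_1a_1^{k_1}\cdots y_na_n^{k_n}$ with $y_i\in E(Y)$, $a_i\in V(Y)$, $k_i\in\mathbb{Z}$, $\iota(y_i)=a_{i-1}$, $\tau(y_i)=a_i$ and $a_n=a_0$.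 The statement $w_{i,j}=a_i^{k_{i,j}}$ includes that $k_{i,j}$ is an integer. *)

(* Defs.v *)
From HB Require Import structures.
From mathcomp Require Import all_boot all_order all_algebra.
Set Implicit Arguments. Unset Strict Implicit. Unset Printing Implicit Defensive.
Import Order.TTheory GRing.Theory Num.Theory.
Local Open Scope ring_scope.

Record GBS := {
  Vt : finType;
  Ed : finType;
  iota : Ed -> Vt;
  tau : Ed -> Vt;
  ebar : Ed -> Ed;
  alpha : Ed -> int;
  beta : Ed -> int;
  ebarK : forall y, ebar (ebar y) = y;
  ebar_neq : forall y, ebar y != y;
  iota_bar : forall y, iota (ebar y) = tau y;
  alpha_neq0 : forall y, alpha y != 0;
  beta_neq0 : forall y, beta y != 0;
  alpha_bar : forall y, alpha y = beta (ebar y);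
  Y_connected : forall u v : Vt,
      connect [rel a b | [exists y, (iota y == a) && (tau y == b)]] u v
}.

Definition gen (G : GBS) : Type := (Vt G + Ed G)%type.

(* Words in the generators and their inverses: (x, true) = x, (x, false) = x^-1. *)
Definition word (G : GBS) := seq (gen G * bool).

Definition letter_inv (G : GBS) (l : gen G * bool) : gen G * bool := (l.1, ~~ l.2).
Definition word_inv (G : GBS) (w : word G) : word G := rev (map (@letter_inv G) w).

Definition gpow (G : GBS) (x : gen G) (m : int) : word G :=
  match m with
  | Posz n => nseq n (x, true)
  | Negz n => nseq n.+1 (x, false)
  end.

Definition vpow (G : GBS) (a : Vt G) (m : int) : word G := gpow (inl a) m.
Definition eletter (G : GBS) (y : Ed G) : word G := [:: (inr y, true)].

Inductive relator (G : GBS) : word G -> Prop :=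
  | rel_inv (y : Ed G) : relator (eletter (ebar y) ++ eletter y)
  | rel_conj (y : Ed G) :
      relator (eletter y ++ vpow (tau y) (beta y) ++ eletter (ebar y)
               ++ vpow (iota y) (- alpha y)).

(* Equality in F(G) = <gens | relators>: the congruence generated by
   free reduction and by deletion of relators. *)
Inductive eqF (G : GBS) : word G -> word G -> Prop :=
  | eqF_refl w : eqF w w
  | eqF_sym u v : eqF u v -> eqF v u
  | eqF_trans u v w : eqF u v -> eqF v w -> eqF u w
  | eqF_free u v (l : gen G * bool) :
      eqF (u ++ [:: l; letter_inv l] ++ v) (u ++ v)
  | eqF_rel u v r : relator r -> eqF (u ++ r ++ v) (u ++ v).

(* A G-factorization a_0^{k_0} y_1 a_1^{k_1} ... y_n a_n^{k_n}
   (indices of a, k in 0..n, of y in 1..n). *)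
Definition factorization (G : GBS) (n : nat) (a : nat -> Vt G)
    (y : nat -> Ed G) (k : nat -> int) : Prop :=
  (forall l, (1 <= l <= n)%N -> iota (y l) = a l.-1 /\ tau (y l) = a l)
  /\ a n = a 0%N.

Definition subword (G : GBS) (a : nat -> Vt G) (y : nat -> Ed G)
    (k : nat -> int) (i j : nat) : word G :=
  vpow (a i) (k i) ++
  flatten [seq eletter (y l) ++ vpow (a l) (k l) | l <- index_iota i.+1 j.+1].

Definition kij (G : GBS) (y : nat -> Ed G) (k : nat -> int) (i j : nat) : rat :=
  \sum_(i <= nu < j.+1)
     ((k nu)%:~R * \prod_(i.+1 <= mu < nu.+1)
                     ((alpha (y mu))%:~R / (beta (y mu))%:~R)).

(* Main.v *)
Require Import Defs.
From mathcomp Require Import all_boot all_order all_algebra.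
From mathcomp Require Import ring.
Import GRing.Theory Num.Theory.
Local Open Scope ring_scope.

Section Aff.
Variable G : GBS.

Definition comp (f g : rat * rat) : rat * rat := (f.1 * g.1, f.1 * g.2 + f.2).
Definition lam (e : Ed G) : rat := (alpha e)%:~R / (beta e)%:~R.
Definition evl (l : gen G * bool) : rat * rat :=
  match l with
  | (inl _, true) => (1, 1)
  | (inl _, false) => (1, -1)
  | (inr e, true) => (lam e, 0)
  | (inr e, false) => ((lam e)^-1, 0)
  end.
Definition ev (w : word G) : rat * rat := foldr (fun l acc => comp (evl l) acc) (1, 0) w.

Lemma comp1 f : comp (1, 0) f = f.
Proof. case: f => x z; rewrite /comp /=; congr pair; ring. Qed.
Lemma compA f g h : comp f (comp g h) = comp (comp f g) h.
Proof. case: f => ? ?; case: g => ? ?; case: h => ? ?; rewrite /comp /=; congr pair; ring. Qed.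

Lemma ev_cat u v : ev (u ++ v) = comp (ev u) (ev v).
Proof. elim: u => [|l u IH] /=; first by rewrite comp1. by rewrite IH compA. Qed.

Lemma lam_neq0 e : lam e != 0.
Proof. by rewrite /lam mulf_neq0 ?invr_eq0 ?intr_eq0 ?alpha_neq0 ?beta_neq0. Qed.

Lemma lam_bar e : lam (ebar e) = (lam e)^-1.
Proof.
rewrite /lam -alpha_bar; have -> : alpha (ebar e) = beta e.
  by rewrite alpha_bar ebarK.
by rewrite invf_div.
Qed.

Lemma ev_inv l : comp (evl l) (evl (letter_inv l)) = (1, 0).
Proof.
case: l => [[x|e] [|]]; rewrite /comp /letter_inv /= ?invrK; congr pair;
  rewrite ?mulr1 ?mulr0 ?addr0 ?subrr ?mulfV ?mulVf ?lam_neq0 ?invr_eq0 ?lam_neq0 //.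
Qed.

Lemma ev_vpow (x : Vt G) (m : int) : ev (vpow x m) = (1, m%:~R).
Proof.
rewrite /vpow /gpow; case: m => [n|n].
  elim: n => [|n IH] /=; first by [].
  move: IH => /= ->; rewrite /comp /= mulr1 mul1r; congr pair.
  by rewrite -[n.+1]addn1 PoszD intrD addrC.
rewrite NegzE; elim: n => [|n IH] /=.
  by rewrite /comp /= mulr1 mulr0 add0r.
move: IH => /= ->; rewrite /comp /= mulr1; congr pair.
by rewrite mul1r -[n.+2]addn1 PoszD opprD intrD.
Qed.

Lemma ev_rel r : relator r -> ev r = (1, 0).
Proof.
case=> e.
  rewrite ev_cat /eletter /= lam_bar /comp /=; congr pair;
    by rewrite ?mulr0 ?addr0 ?mulr1 // mulVf ?lam_neq0.
rewrite !ev_cat !ev_vpow /eletter /= lam_bar /comp /=.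
rewrite !mulr1 !mul1r !mulr0 !addr0 mulfV ?lam_neq0 //; congr pair.
rewrite mulrDr mulrA mulfV ?lam_neq0 // mul1r.
rewrite /lam intrN -mulrA mulVf ?intr_eq0 ?beta_neq0 // mulr1.
by rewrite addrC subrr.
Qed.

Lemma eqF_ev u v : eqF u v -> ev u = ev v.
Proof.
elim=> //.
- by move=> u1 v1 w1 H1 IH1 H2 IH2; rewrite IH1 IH2.
- move=> u' v' l; rewrite !ev_cat.
  have -> : ev [:: l; letter_inv l] = (1, 0).
    change (comp (evl l) (comp (evl (letter_inv l)) (1,0)) = (1,0)).
    by rewrite compA ev_inv comp1.
  by rewrite comp1.
- by move=> u' v' r Hr; rewrite !ev_cat (ev_rel r Hr) comp1.
Qed.

Lemma ev_sub (a : nat -> Vt G) (y : nat -> Ed G) (k : nat -> int) i d :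
  ev (subword a y k i (i + d)) =
  (\prod_(i.+1 <= mu < (i + d).+1) lam (y mu), kij y k i (i + d)).
Proof.
elim: d => [|d IH].
  rewrite addn0 /subword /kij big_nat1 /index_iota subnn /= cats0 ev_vpow.
  by rewrite big_nil mulr1.
have E : subword a y k i (i + d.+1) =
   subword a y k i (i + d) ++ (eletter (y (i + d).+1) ++ vpow (a (i + d).+1) (k (i + d).+1)).
  rewrite /subword -catA; congr cat.
  rewrite /index_iota !subSS !addKn.
  rewrite -[d.+1]addn1 iotaD map_cat flatten_cat /= cats0; by [] || congr (_ ++ _).
rewrite E ev_cat IH ev_cat ev_vpow /eletter /comp /= !mulr1 !mulr0 !addr0 addnS.
have Hle : (i.+1 <= (i + d).+1)%N by rewrite ltnS leq_addr.
congr pair; first by rewrite [in RHS]big_nat_recr.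
rewrite /kij [in RHS]big_nat_recr /=; last by rewrite ltnW.
rewrite [X in _ = _ + _ * X]big_nat_recr //= addrC; congr (_ + _).
rewrite /lam; ring.
Qed.

End Aff.

Theorem lemma3p2 (G : GBS) (n : nat) (a : nat -> Vt G) (y : nat -> Ed G)
    (k : nat -> int) (i j : nat) :
  factorization n a y k -> (i <= j)%N -> (j <= n)%N ->
  ((exists m : int, eqF (subword a y k i j) (vpow (a i) m)) <->
   (exists m : int, (m%:~R : rat) = kij y k i j /\
                    eqF (subword a y k i j) (vpow (a i) m))).
Proof.
move=> _ Hij _; split; last by case=> m [_ H]; exists m.
case=> m H; exists m; split=> //.
have := @eqF_ev G _ _ H; rewrite ev_vpow.
have -> : j = (i + (j - i))%N by rewrite subnKC.
by rewrite ev_sub => -[_ ->].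
Qed.
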